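(* Let $G=(V,E)$ be a transitive and finite directed graph with in-degree at least $2$ at every vertex, and let $v\in V$ have in-degree $d_v\ge3$. Then the $v$-lag $\widehat{G}_v$ (for any choice of ordering of incoming edges) is a finite transitive directed graph with in-degree at least $2$ at every vertex, and it has one fewer vertex of in-degree at least $3$ than $G$.
   Context: A directed graph $G=(V,E,r,s)$; in-degree of $v$ is $|r^{-1}(v)|$; a path $e_1\cdots e_n$ has $s(e_i)=r(e_{i+1})$, and ''an edge from $u$ to $w$'' has source $u$ and range $w$; $G$ is transitive if there is a path between any two vertices. The $v$-lag $\widehat{G}_v=(\widehat{V}_v,\widehat{E}_v)$ of $G$ at a vertex $v$ of in-degree $d_v\ge3$: enumerate the edges with range $v$ as $e_0,\dots,e_{d_v-1}$, with sources $u_0,\dots,u_{d_v-1}$ (repetitions allowed). Keep all vertices of $G$ and all edges not ranging in $v$. Add new vertices $v_1,\dots,v_{d_v-2}$, an edge $f_1$ from $v_1$ to $v$, and edges $f_i$ from $v_i$ to $v_{i-1}$ for $2\le i\le d_v-2$. Replace $e_0$ by an edge $\hat e_0$ from $u_0$ to $v$; replace $e_j$ by an edge $\hat e_j$ from $u_j$ to $v_j$ for $1\le j\le d_v-2$; replace $e_{d_v-1}$ by an edge $\hat e_{d_v-1}$ from $u_{d_v-1}$ to $v_{d_v-2}$. Thus $\widehat{V}_v=V\sqcup\{v_1,\dots,v_{d_v-2}\}$. *)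

(* Defs.v *)
From mathcomp Require Import all_boot.
Set Implicit Arguments. Unset Strict Implicit. Unset Printing Implicit Defensive.

(* A finite directed graph G = (V, E, r, s): r = range, s = source.
   Multiple edges and loops are allowed. *)
Record digraph := Digraph {
  dV : finType;
  dE : finType;
  rg : dE -> dV;
  sr : dE -> dV
}.

Definition indeg {G : digraph} (x : dV G) : nat := #|[set e : dE G | rg e == x]|.

Definition adj (G : digraph) : rel (dV G) :=
  fun x y => [exists e : dE G, (sr e == x) && (rg e == y)].

Definition transitive_graph (G : digraph) : Prop :=
  forall u w : dV G, connect (@adj G) u w.

Section Lag.
Variables (G : digraph) (v : dV G).
Let d := indeg v.
(* ordering of the edges with range v: e_j = o j, j < d *)
Variable o : 'I_d -> dE G.

(* the new vertex v_k (1 <= k <= d-2) is  inr (k-1) ;  v_0 := v *)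
Definition lag_V : finType := (dV G + 'I_(d - 2))%type.
(* old edges (e or its replacement \hat e_j) and the new edges f_{i+1} = inr i *)
Definition lag_E : finType := (dE G + 'I_(d - 2))%type.

Definition lag_vk (k : nat) : lag_V :=
  if k == 0 then inl v
  else match insub (k - 1) with Some i => inr i | None => inl v end.

Definition lag_idx (e : dE G) : nat :=
  if [pick j | o j == e] is Some j then val j else 0.

Definition lag_rg (e : lag_E) : lag_V :=
  match e with
  | inl e => if rg e == v then lag_vk (minn (lag_idx e) (d - 2)) else inl (rg e)
  | inr i => lag_vk (val i)            (* f_{i+1} : v_{i+1} -> v_i *)
  end.

Definition lag_sr (e : lag_E) : lag_V :=
  match e with
  | inl e => inl (sr e)
  | inr i => inr i
  end.

Definition lag : digraph := @Digraph lag_V lag_E lag_rg lag_sr.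
End Lag.

(* Main.v *)
Require Import Defs.
From mathcomp Require Import all_boot.
From mathcomp Require Import zify.
Set Implicit Arguments.

Lemma card_sum_pred (A B : finType) (P : pred (A + B)%type) :
  #|[set x | P x]| = #|[set a | P (inl a)]| + #|[set b | P (inr b)]|.
Proof.
rewrite -!sum1_card.
rewrite (big_sumType _ (fun x => x \in [set x | P x])) /=.
by congr (_ + _); apply: eq_bigl => x; rewrite !inE.
Qed.

Lemma lag_vk_inr (G : digraph) (v : dV G) (k : nat) (i : 'I_(indeg v - 2)) :
  (lag_vk v k == inr i) = (k == i.+1).
Proof.
rewrite /lag_vk; have [->|k0] := eqVneq k 0 => //.
case: insubP => [j _ jE|].
  apply/eqP/eqP => [[<-]|ke]; first by rewrite jE; lia.
  by congr inr; apply: val_inj; rewrite /= jE ke subn1.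
move=> h; suff -> : (k == i.+1) = false by [].
apply/eqP => ke; move: h; rewrite ke subn1 /=.
by rewrite ltn_ord.
Qed.

Lemma lag_vk_inl (G : digraph) (v : dV G) (k : nat) (x : dV G) :
  k <= indeg v - 2 -> (lag_vk v k == inl x) = (k == 0) && (x == v).
Proof.
move=> kle; rewrite /lag_vk; have [k0|k0] := eqVneq k 0 => /=.
  by apply/eqP/eqP => [[]|->].
case: insubP => [j _ jE|] //.
by move=> h; exfalso; move/negP: h; apply; lia.
Qed.

Lemma lag_idx_o (G : digraph) (v : dV G) (o : 'I_(indeg v) -> dE G) :
  injective o -> forall j, lag_idx o (o j) = j.
Proof.
move=> oi j; rewrite /lag_idx; case: pickP => [k /eqP /oi -> //|].
by move/(_ j); rewrite eqxx.
Qed.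

Lemma o_onto (G : digraph) (v : dV G) (o : 'I_(indeg v) -> dE G) :
  injective o -> (forall j, rg (o j) = v) ->
  forall e, rg e = v -> exists j, o j = e.
Proof.
move=> oi og e ev.
have sub : o @: setT \subset [set e : dE G | rg e == v].
  by apply/subsetP => x /imsetP [j _ ->]; rewrite inE og.
have : o @: setT = [set e : dE G | rg e == v].
  apply/eqP; rewrite eqEcard sub /= card_imset // cardsT card_ord //.
move/setP/(_ e); rewrite inE ev eqxx => /imsetP [j _ ->]; by exists j.
Qed.

Lemma card_idx (G : digraph) (v : dV G) (o : 'I_(indeg v) -> dE G) (P : pred nat) :
  injective o -> (forall j, rg (o j) = v) ->
  #|[set e | (rg e == v) && P (lag_idx o e)]| = #|[set j : 'I_(indeg v) | P j]|.
Proof.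
move=> oi og; rewrite -(card_imset _ oi); apply: eq_card => e.
rewrite inE; apply/andP/imsetP => [[/eqP ev pe]|[j]].
  have [j je] := @o_onto G v o oi og e ev; exists j => //.
  by rewrite -je lag_idx_o in pe; rewrite ?inE.
by rewrite inE => pj ->; rewrite og lag_idx_o.
Qed.

Lemma indeg_old (G : digraph) (v : dV G) (o : 'I_(indeg v) -> dE G) (x : dV G) :
  x != v -> @indeg (lag o) (inl x) = indeg x.
Proof.
move=> xv; rewrite /indeg card_sum_pred /=.
rewrite (_ : [set b : 'I_(indeg v - 2) | _] = set0) ?cards0 ?addn0; last first.
  apply/setP => b; rewrite !inE lag_vk_inl ?(negbTE xv) ?andbF //.
  by have := ltn_ord b; lia.
apply: eq_card => e; rewrite !inE.
have [ev|ev] := eqVneq (rg e) v.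
  rewrite lag_vk_inl ?(negbTE xv) ?andbF; last lia.
  by apply/esym/negbTE; rewrite ev eq_sym.
by apply/eqP/eqP => [[]|->].
Qed.

Lemma indeg_v (G : digraph) (v : dV G) (o : 'I_(indeg v) -> dE G) :
  3 <= indeg v -> injective o -> (forall j, rg (o j) = v) ->
  @indeg (lag o) (inl v) = 2.
Proof.
move=> d3 oi og; rewrite /indeg card_sum_pred /=.
have h0 : 0 < indeg v - 2 by lia.
have h1 : 0 < indeg v by lia.
rewrite (_ : [set b : 'I_(indeg v - 2) | _] = [set Ordinal h0]) ?cards1; last first.
  apply/setP => b; rewrite !inE lag_vk_inl ?eqxx ?andbT; last by have := ltn_ord b; lia.
  by rewrite -val_eqE.
rewrite (_ : #|_| = #|[set e | (rg e == v) && (minn (lag_idx o e) (indeg v - 2) == 0)]|).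
  rewrite (@card_idx G v o (fun k => minn k (indeg v - 2) == 0)) // (_ : [set j : 'I_(indeg v) | _] = [set Ordinal h1]) ?cards1 //.
  apply/setP => j; rewrite !inE -val_eqE /=; lia.
apply: eq_card => e; rewrite !inE.
have [ev|ev] := eqVneq (rg e) v.
  by rewrite lag_vk_inl ?eqxx ?andbT //; lia.
by apply/negbTE; apply: contra ev => /eqP [->].
Qed.

Lemma indeg_new (G : digraph) (v : dV G) (o : 'I_(indeg v) -> dE G) (i : 'I_(indeg v - 2)) :
  3 <= indeg v -> injective o -> (forall j, rg (o j) = v) ->
  @indeg (lag o) (inr i) = 2.
Proof.
move=> d3 oi og; rewrite /indeg card_sum_pred /=.
rewrite (_ : #|[set a | _]| = #|[set e | (rg e == v) && (minn (lag_idx o e) (indeg v - 2) == i.+1)]|); last first.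
  apply: eq_card => e; rewrite !inE.
  have [ev|ev] := eqVneq (rg e) v; first by rewrite lag_vk_inr.
  by [].
rewrite (@card_idx G v o (fun k => minn k (indeg v - 2) == i.+1)) //.
have hi := ltn_ord i.
have [lt|ge] := ltnP i.+1 (indeg v - 2).
  have h1 : i.+1 < indeg v by lia.
  rewrite (_ : [set j : 'I_(indeg v) | _] = [set Ordinal h1]) ?cards1; last first.
    by apply/setP => j; rewrite !inE -val_eqE /=; lia.
  rewrite (_ : [set b : 'I_(indeg v - 2) | _] = [set Ordinal lt]) ?cards1 //.
  apply/setP => b; rewrite !inE lag_vk_inr -val_eqE /=.
  by rewrite eq_sym.
have h1 : indeg v - 2 < indeg v by lia.
have h2 : indeg v - 1 < indeg v by lia.
rewrite (_ : [set j : 'I_(indeg v) | _] = [set Ordinal h1; Ordinal h2]); last first.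
  by apply/setP => j; rewrite !inE -!val_eqE /=; have := ltn_ord j; lia.
rewrite cards2 (_ : (Ordinal h1 != Ordinal h2) = true); last by rewrite -val_eqE /=; lia.
rewrite (_ : [set b : 'I_(indeg v - 2) | _] = set0) ?cards0 //.
apply/setP => b; rewrite !inE lag_vk_inr; have := ltn_ord b; lia.
Qed.

Lemma chain_v (G : digraph) (v : dV G) (o : 'I_(indeg v) -> dE G) (k : nat) :
  k <= indeg v - 2 -> connect (@adj (lag o)) (lag_vk v k) (inl v).
Proof.
elim: k => [|k IH] kle; first by rewrite /lag_vk /=.
apply: connect_trans (IH (ltnW kle)).
have kl : k < indeg v - 2 by [].
apply: connect1; apply/existsP; exists (inr (Ordinal kl)); rewrite /= eqxx /=.
by rewrite andbT eq_sym lag_vk_inr.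
Qed.

Lemma lift_adj (G : digraph) (v : dV G) (o : 'I_(indeg v) -> dE G) (a b : dV G) :
  adj a b -> connect (@adj (lag o)) (inl a) (inl b).
Proof.
move=> /existsP [e /andP [/eqP ea /eqP eb]].
have [ev|ev] := eqVneq (rg e) v.
  have -> : b = v by rewrite -eb.
  apply: connect_trans (@chain_v G v o _ (geq_minr (lag_idx o e) (indeg v - 2))).
  by apply: connect1; apply/existsP; exists (inl e); rewrite /= ea ev !eqxx.
by apply: connect1; apply/existsP; exists (inl e); rewrite /= ea (negbTE ev) eb !eqxx.
Qed.

Lemma lift_connect (G : digraph) (v : dV G) (o : 'I_(indeg v) -> dE G) (a b : dV G) :
  connect (@adj G) a b -> connect (@adj (lag o)) (inl a) (inl b).
Proof.
move=> /connectP [p]; elim: p a => [|c p IH] a /=; first by move=> _ ->.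
move=> /andP [ac pc] bl; exact: connect_trans (lift_adj o _ _ ac) (IH c pc bl).
Qed.

Theorem lemma3p6 (G : digraph) (v : dV G) (o : 'I_(indeg v) -> dE G) :
  transitive_graph G ->
  (forall x : dV G, 2 <= indeg x) ->
  3 <= indeg v ->
  injective o ->
  (forall j, rg (o j) = v) ->
  transitive_graph (lag o) /\
  (forall x : dV (lag o), 2 <= indeg x) /\
  #|[set x : dV (lag o) | 3 <= indeg x]|.+1 = #|[set x : dV G | 3 <= indeg x]|.
Proof.
move=> hT h2 d3 oi og.
have indegE : forall x : dV (lag o), indeg x = 
    if x is inl a then (if a == v then 2 else indeg a) else 2.
  case=> [a|i]; last exact: indeg_new.
  have [->|av] := eqVneq a v; first exact: indeg_v.
  exact: indeg_old.
split; last split.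
- have to_v : forall u : dV (lag o), connect (@adj (lag o)) u (inl v).
    case=> [a|i]; first exact: lift_connect.
    have -> : (inr i : dV (lag o)) = lag_vk v i.+1 by apply/esym/eqP; rewrite lag_vk_inr.
    by apply: chain_v; have := ltn_ord i.
  have from_v : forall w : dV (lag o), connect (@adj (lag o)) (inl v) w.
    case=> [b|i]; first exact: lift_connect.
    have hi := ltn_ord i.
    have hj : i.+1 < indeg v by lia.
    apply: connect_trans (lift_connect o _ _ (hT v (sr (o (Ordinal hj))))) _.
    apply: connect1; apply/existsP; exists (inl (o (Ordinal hj))).
    rewrite /= eqxx /= og eqxx lag_idx_o //=.
    by rewrite (_ : minn i.+1 (indeg v - 2) = i.+1) ?lag_vk_inr //; lia.
  by move=> u w; apply: connect_trans (to_v u) (from_v w).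
- by move=> x; rewrite indegE; case: x => [a|i] //; case: eqP.
have -> : [set x : dV (lag o) | 3 <= indeg x] = inl @: [set x | (x != v) && (3 <= indeg x)].
  apply/setP; case=> [a|i]; rewrite inE indegE.
    rewrite (mem_imset _ _ (@inl_inj _ _)) inE.
    by case: eqP.
  apply/esym/negbTE/imsetP => -[x _] //.
rewrite card_imset; last exact: inl_inj.
rewrite [RHS](cardsD1 v) inE d3 /= add1n; congr _.+1.
by apply: eq_card => x; rewrite !inE.
Qed.
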